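(* Let $(I,\le)$ be a partially ordered set and $(B_i)_{i\in I}$ a partial Boolean algebra in which every $B_i$ is complete and $B_i\subseteq B_j$ for $i\le j$. Let $X=\bigcup_{i\in I}B_i$ be the associated complete orthomodular lattice and $Y=\{f:I\to X\mid f(i)\in B_i\ \forall i,\ f \text{ monotone}\}$ the associated complete Heyting algebra (ordered pointwise). Define $D:X\to Y$ by $D(x)(i)=x$ if $x\in B_i$ and $D(x)(i)=0$ if $x\notin B_i$. Then $D$ is injective and reflects the order: if $D(x)\le D(y)$ in $Y$, then $x\le y$ in $X$.
   Context: A partial Boolean algebra is a family $(B_i)_{i\in I}$ of Boolean algebras whose structure coincides on overlaps: all $B_i$ have the same least element $0$; for $x,y\in B_i\cap B_j$, $x\le_i y$ iff $x\le_j y$, $\neg_i x=\neg_j x$, $x\vee_i y=x\vee_j y$; if $x\le_i y$ and $y\le_j z$ then $x\le_k z$ for some $k$; and if $y\le_i\neg_i x$, $x\le_j z$, $y\le_k z$ then $x,y,z\in B_l$ for some $l$. The union $X=\bigcup_iB_i$ then carries the amalgamated structure ($x\le y$ iff $x\le_i y$ in some $B_i$ containing both, $x^\perp=\neg_i x$, etc.), making it an orthomodular lattice. *)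

(* Defs.v *)
From Stdlib Require Import ClassicalEpsilon.

Set Implicit Arguments.

Record is_boolean_algebra (X : Type) (S : X -> Prop) (le : X -> X -> Prop)
  (zero one : X) (join meet : X -> X -> X) (neg : X -> X) : Prop := {
  ba_zero_in : S zero;
  ba_one_in : S one;
  ba_join_in : forall x y, S x -> S y -> S (join x y);
  ba_meet_in : forall x y, S x -> S y -> S (meet x y);
  ba_neg_in : forall x, S x -> S (neg x);
  ba_refl : forall x, S x -> le x x;
  ba_antisym : forall x y, S x -> S y -> le x y -> le y x -> x = y;
  ba_trans : forall x y z, S x -> S y -> S z -> le x y -> le y z -> le x z;
  ba_zero_least : forall x, S x -> le zero x;
  ba_one_greatest : forall x, S x -> le x one;
  ba_join_ub_l : forall x y, S x -> S y -> le x (join x y);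
  ba_join_ub_r : forall x y, S x -> S y -> le y (join x y);
  ba_join_least : forall x y z, S x -> S y -> S z -> le x z -> le y z -> le (join x y) z;
  ba_meet_lb_l : forall x y, S x -> S y -> le (meet x y) x;
  ba_meet_lb_r : forall x y, S x -> S y -> le (meet x y) y;
  ba_meet_greatest : forall x y z, S x -> S y -> S z -> le z x -> le z y -> le z (meet x y);
  ba_distr : forall x y z, S x -> S y -> S z ->
    meet x (join y z) = join (meet x y) (meet x z);
  ba_compl_join : forall x, S x -> join x (neg x) = one;
  ba_compl_meet : forall x, S x -> meet x (neg x) = zero
}.

Definition is_complete (X : Type) (S : X -> Prop) (le : X -> X -> Prop) : Prop :=
  forall A : X -> Prop, (forall a, A a -> S a) ->
    exists s, S s /\ (forall a, A a -> le a s) /\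
      (forall t, S t -> (forall a, A a -> le a t) -> le s t).

Record partial_boolean_algebra (I X : Type) (B : I -> X -> Prop)
  (le : I -> X -> X -> Prop) (zero : X) (one : I -> X)
  (join meet : I -> X -> X -> X) (neg : I -> X -> X) : Prop := {
  pba_ba : forall i, is_boolean_algebra (B i) (le i) zero (one i) (join i) (meet i) (neg i);
  pba_le_coh : forall i j x y, B i x -> B i y -> B j x -> B j y -> (le i x y <-> le j x y);
  pba_neg_coh : forall i j x, B i x -> B j x -> neg i x = neg j x;
  pba_join_coh : forall i j x y, B i x -> B i y -> B j x -> B j y -> join i x y = join j x y;
  pba_trans : forall i j x y z, B i x -> B i y -> B j y -> B j z ->
    le i x y -> le j y z -> exists k, B k x /\ B k z /\ le k x z;
  pba_orth : forall i j k x y z, B i x -> B i y -> B j x -> B j z -> B k y -> B k z ->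
    le i y (neg i x) -> le j x z -> le k y z -> exists l, B l x /\ B l y /\ B l z
}.

Definition leX (I X : Type) (B : I -> X -> Prop) (le : I -> X -> X -> Prop)
  (x y : X) : Prop := exists i, B i x /\ B i y /\ le i x y.

Definition inY (I X : Type) (leI : I -> I -> Prop) (B : I -> X -> Prop)
  (le : I -> X -> X -> Prop) (f : I -> X) : Prop :=
  (forall i, B i (f i)) /\ (forall i j, leI i j -> le j (f i) (f j)).

Definition leY (I X : Type) (le : I -> X -> X -> Prop) (f g : I -> X) : Prop :=
  forall i, le i (f i) (g i).

Definition Dmap (I X : Type) (B : I -> X -> Prop) (zero : X) (x : X) : I -> X :=
  fun i => if excluded_middle_informative (B i x) then x else zero.

(* Main.v *)
Require Import Defs.
From Stdlib Require Import ClassicalEpsilon.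

Theorem proposition21 (I X : Type) (leI : I -> I -> Prop)
  (B : I -> X -> Prop) (le : I -> X -> X -> Prop) (zero : X) (one : I -> X)
  (join meet : I -> X -> X -> X) (neg : I -> X -> X)
  (leI_refl : forall i, leI i i)
  (leI_antisym : forall i j, leI i j -> leI j i -> i = j)
  (leI_trans : forall i j k, leI i j -> leI j k -> leI i k)
  (HB : partial_boolean_algebra B le zero one join meet neg)
  (Hcompl : forall i, is_complete (B i) (le i))
  (Hmono : forall i j x, leI i j -> B i x -> B j x)
  (Hcover : forall x : X, exists i, B i x) :
  (forall x, inY leI B le (Dmap B zero x)) /\
  (forall x y, Dmap B zero x = Dmap B zero y -> x = y) /\
  (forall x y, leY le (Dmap B zero x) (Dmap B zero y) -> leX B le x y).
Proof.
  assert (BA := pba_ba HB).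
  assert (Din : forall x i, B i (Dmap B zero x i)).
  { intros x i; unfold Dmap; destruct (excluded_middle_informative (B i x)).
    auto. apply (ba_zero_in (BA i)). }
  assert (Dx : forall x i, B i x -> Dmap B zero x i = x).
  { intros x i H; unfold Dmap; destruct (excluded_middle_informative (B i x)); tauto. }
  assert (Dz : forall x i, ~ B i x -> Dmap B zero x i = zero).
  { intros x i H; unfold Dmap; destruct (excluded_middle_informative (B i x)); tauto. }
  assert (half : forall x y, Dmap B zero x = Dmap B zero y -> x = zero -> y = zero).
  { intros x y E Hx. destruct (Hcover y) as [j Hj].
    pose proof (f_equal (fun f => f j) E) as E'; simpl in E'.
    rewrite (Dx y j Hj) in E'. rewrite <- E'. unfold Dmap.
    destruct (excluded_middle_informative (B j x)); auto. }
  split; [|split].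
  - intro x; split; [apply Din|].
    intros i j Hij. destruct (excluded_middle_informative (B i x)) as [b|b].
    + rewrite (Dx x i b), (Dx x j (Hmono _ _ _ Hij b)).
      apply (ba_refl (BA j)); eauto.
    + rewrite (Dz x i b). apply (ba_zero_least (BA j)); auto.
  - intros x y E. destruct (Hcover x) as [i Hi].
    pose proof (f_equal (fun f => f i) E) as E'; simpl in E'.
    rewrite (Dx x i Hi) in E'.
    destruct (excluded_middle_informative (B i y)) as [b|b].
    + rewrite (Dx y i b) in E'. auto.
    + rewrite (Dz y i b) in E'. rewrite E'. symmetry. apply (half x y E E').
  - intros x y H. destruct (Hcover x) as [i Hi]. specialize (H i).
    rewrite (Dx x i Hi) in H.
    destruct (excluded_middle_informative (B i y)) as [b|b].
    + rewrite (Dx y i b) in H. exists i; auto.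
    + rewrite (Dz y i b) in H.
      assert (x = zero).
      { apply (ba_antisym (BA i)); auto. apply (ba_zero_in (BA i)).
        apply (ba_zero_least (BA i)); auto. }
      subst x. destruct (Hcover y) as [j Hj]. exists j.
      split; [apply (ba_zero_in (BA j))|]. split; auto.
      apply (ba_zero_least (BA j)); auto.
Qed.
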